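(* Let $p>2$, $M>1$, $s_0>M$, $\ell\in\left(p,\min\left\{\frac{(p-1)^2+p-2}{p-2},p^*\right\}\right)$, and for $q\ge p+1$ let $\mathcal N_q$ be as in the context. There exists $\sigma>0$ such that $$\inf_{q\ge p+1}\ \inf_{u\in\mathcal N_q}\|u\|_{L^\infty(B)}\ge\sigma.$$
   Context: $B$ is the open unit ball of $\mathbb R^N$; $p^*=Np/(N-p)$ if $p<N$, $+\infty$ otherwise. $\mathcal C:=\{u\in W^{1,p}_{\mathrm{rad}}(B): u\ge0,\ u(r)\le u(s)\ \text{for }0<r\le s\le1\}$ (radial functions as functions of $r=|x|$). For $q\ge p+1$: $\tilde f_q(s)=s^{q-1}$ on $[0,s_0]$, $\tilde f_q(s)=s_0^{q-1}+\frac{q-1}{\ell-1}s_0^{q-\ell}(s^{\ell-1}-s_0^{\ell-1})$ for $s>s_0$, $\tilde f_q=0$ on $(-\infty,0)$; $\mathcal N_q:=\{u\in\mathcal C\setminus\{0\}: \int_B(|\nabla u|^p+|u|^p)dx=\int_B\tilde f_q(u)u\,dx\}$. *)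

(* Defs.v *)
From HB Require Import structures.
From mathcomp Require Import all_boot all_order all_algebra.
From mathcomp Require Import all_classical all_reals all_analysis.
Set Implicit Arguments. Unset Strict Implicit. Unset Printing Implicit Defensive.
Import Order.TTheory GRing.Theory Num.Theory.
Import numFieldNormedType.Exports.
Local Open Scope classical_set_scope.
Local Open Scope ring_scope.

Section Defs.
Variable R : realType.
Local Notation leb := (@lebesgue_measure R).

Definition pstar (N : nat) (p : R) : \bar R :=
  if p < N%:R then ((N%:R * p) / (N%:R - p))%:E else +oo%E.

Definition ftilde (s0 l q : R) (s : R) : R :=
  if s < 0 then 0
  else if s <= s0 then s `^ (q - 1)
  else s0 `^ (q - 1) + (q - 1) / (l - 1) * s0 `^ (q - l)
                        * (s `^ (l - 1) - s0 `^ (l - 1)).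

(* Radial functions are represented as functions of r = |x| on ]0,1].
   g is the (radial) weak derivative u' of u: u is locally absolutely
   continuous on ]0,1] with u(r) = u(1) - \int_r^1 g. *)
Definition radial_deriv (u g : R -> R) : Prop :=
  measurable_fun `](0:R), 1]%classic g /\
  forall r : R, 0 < r <= 1 ->
    leb.-integrable `[r, (1:R)]%classic (EFin \o g) /\
    u r = u 1 - fine (\int[leb]_(t in `[r, (1:R)]%classic) (g t)%:E).

(* weighted radial integral: \int_B F(|x|) dx = |S^{N-1}| \int_0^1 F(r) r^{N-1} dr *)
Definition radint (N : nat) (F : R -> R) : \bar R :=
  \int[leb]_(r in `](0:R), 1]%classic) (F r * r ^+ N.-1)%:E.

Definition W1p_rad_with (N : nat) (p : R) (u g : R -> R) : Prop :=
  radial_deriv u g /\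
  measurable_fun `](0:R), 1]%classic u /\
  (radint N (fun r => (`|g r| `^ p)%R) < +oo)%E /\
  (radint N (fun r => (`|u r| `^ p)%R) < +oo)%E.

Definition cone_C (N : nat) (p : R) (u : R -> R) : Prop :=
  (exists g, W1p_rad_with N p u g) /\
  (forall r, 0 < r <= 1 -> 0 <= u r) /\
  (forall r s, 0 < r -> r <= s -> s <= 1 -> u r <= u s).

Definition nonzero_rad (u : R -> R) : Prop := exists r, 0 < r <= 1 /\ u r != 0.

Definition nehari (N : nat) (p s0 l q : R) (u : R -> R) : Prop :=
  cone_C N p u /\ nonzero_rad u /\
  exists g, W1p_rad_with N p u g /\
    radint N (fun r => `|g r| `^ p + `|u r| `^ p)
    = radint N (fun r => ftilde s0 l q (u r) * u r).

(* ||u||_{L^infty(B)}, computed on the continuous representative on ]0,1] *)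
Definition linf_norm (u : R -> R) : \bar R :=
  ereal_sup [set (`|u r|)%:E | r in `](0:R), 1]%classic].
End Defs.

(* Main.v *)
Require Import Defs.
From HB Require Import structures.
From mathcomp Require Import all_boot all_order all_algebra.
From mathcomp Require Import all_classical all_reals all_analysis.
From mathcomp Require Import measurable_realfun lra.
Import Order.TTheory GRing.Theory Num.Theory.
Import numFieldNormedType.Exports.
Local Open Scope ring_scope.

Lemma le_int_sub d (T : measurableType d) (R: realType) (mu : {measure set T -> \bar R})
  (A D : set T) (f g : T -> \bar R):
  (forall x, A x -> (0 <= f x)%E) -> (forall x, D x -> (0 <= g x)%E) ->
  (forall x, A x -> D x /\ (f x <= g x)%E) ->
  (\int[mu]_(x in A) f x <= \int[mu]_(x in D) g x)%E.
Proof.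
move=> f0 g0 fg; rewrite !ge0_integralE //.
apply: le_ereal_sup => _ [h /= hf <-]; exists h => //= x.
apply: le_trans (hf x) _; rewrite /patch; case: ifPn => [|_].
  rewrite inE => /fg [Dx fgx]; by rewrite ifT ?inE.
by case: ifPn => //; rewrite inE => /g0.
Qed.

Arguments le_int_sub {d T R} mu {A D f g}.

Lemma pointwise (R : realType) (p s0 l q a x : R) :
  2 < p -> p + 1 <= q -> a < 1 -> 1 < s0 -> 0 <= x -> x <= a ->
  ftilde s0 l q x * x <= a * (`|x| `^ p).
Proof.
move=> p2 qp a1 s01 x0 xa.
have xs0 : x <= s0 by rewrite (le_trans xa) // ltW // (lt_trans a1).
rewrite /ftilde ltNge x0 /= xs0 ger0_norm //.
have [->|xn0] := eqVneq x 0.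
  by rewrite mulr0 mulr_ge0 // ?powR_ge0 // (le_trans x0).
have xp : 0 < x by rewrite lt_neqAle eq_sym xn0 x0.
rewrite [a * _]mulrC; apply: ler_pM => //; first exact: powR_ge0.
apply: ger_powR; first by rewrite xp /= (le_trans xa) // ltW.
by rewrite lerBrDr.
Qed.

Local Open Scope classical_set_scope.
Lemma near1 (R : realType) (u g : R -> R) : radial_deriv u g -> 0 < u 1 ->
  exists r, 0 < r < 1 /\ 0 < u r.
Proof.
move=> [mg rd] a0.
have h2a : (0:R) < 1/2 by lra.
have h2b : (1/2:R) <= 1 by lra.
have h2 := andb_true_intro (conj h2a h2b).
have [ig _] := rd (1/2) h2.
pose f := g \_ `[1/2, (1:R)].
have intf : (@lebesgue_measure R).-integrable setT (EFin \o f).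
  by rewrite -restrict_EFin; apply/integrable_restrict => //=; rewrite setTI.
have [d [d0 hd]] := integral_normr_continuous intf a0.
pose r := Num.max (1/2) (1 - d/2).
have r2 : 1/2 <= r by rewrite le_max lexx.
have r1 : r < 1.
  rewrite gt_max; apply/andP; split; lra.
have r0 : 0 < r by rewrite (lt_le_trans _ r2) //; case/andP: h2.
have rd2 : 1 - d/2 <= r by rewrite le_max lexx orbT.
clearbody r.
have [igr ur] := rd r (andb_true_intro (conj r0 (ltW r1))).
exists r; split; first by rewrite r0 r1.
rewrite ur.
have -> : fine (\int[lebesgue_measure]_(t in `[r, 1]) (g t)%:E) =
   (\int[lebesgue_measure]_(t in `[r, (1:R)]) g t)%R by [].
have Hle : `|(\int[lebesgue_measure]_(t in `[r, (1:R)]) g t)%R| <=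
    (\int[lebesgue_measure]_(t in `[r, (1:R)]) `|g t|)%R.
  by apply: le_normr_Rintegral => //; exact: measurable_itv.
have Hsub : `[r, (1:R)] `<=` `[1/2, (1:R)].
  by apply: subset_itvr; rewrite bnd_simp.
have Heq : (\int[lebesgue_measure]_(t in `[r, (1:R)]) `|g t|)%R =
    (\int[lebesgue_measure]_(t in `[r, (1:R)]) `|f t|)%R.
  apply: eq_Rintegral => z; rewrite inE => zr.
  by rewrite /f patchE ifT // inE; apply: Hsub.
have Hlt : (\int[lebesgue_measure]_(t in `[r, (1:R)]) `|f t|)%R < u 1.
  apply: hd; first exact: measurable_itv.
  apply: (@le_lt_trans _ _ ((1 - r)%:E)).
    have := lebesgue_measure_itv (Interval (BLeft r) (BRight (1:R))).
    rewrite /= lte_fin r1 -EFinD => E; by rewrite -E.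
  rewrite lte_fin.
  clear -rd2 d0; lra.
set X := (\int[lebesgue_measure]_(t in `[r, (1:R)]) g t)%R in Hle *.
have HX := ler_norm X; rewrite Heq in Hle.
have HXu : X < u 1 := le_lt_trans HX (le_lt_trans Hle Hlt).
by rewrite subr_gt0.
Qed.

Theorem lemma5p2 (R : realType) (N : nat) (p M s0 l : R) :
  (1 <= N)%N -> 2 < p -> 1 < M -> M < s0 ->
  p < l -> l < ((p - 1) ^+ 2 + p - 2) / (p - 2) -> (l%:E < pstar N p)%E ->
  exists sigma : R, 0 < sigma /\
    forall (q : R) (u : R -> R), p + 1 <= q -> nehari N p s0 l q u ->
      (sigma%:E <= linf_norm u)%E.
Proof.
move=> N1 p2 M1 Ms0 pl _ _.
exists 1; split => // q u qp [[_ [u0 umono]] [[r0 [r0D ur0]] [g [[rd [mu_ [Ig Iu]]] neh]]]].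
have ub : ((`|u 1|)%:E <= linf_norm u)%E.
  apply: ereal_sup_ubound; exists 1 => //.
  by rewrite /= in_itv /= ltr01 lexx.
have [a1|a1] := leP 1 (u 1).
  apply: le_trans ub; rewrite lee_fin ger0_norm //.
  exact: le_trans a1.
exfalso.
have s01 : 1 < s0 by apply: lt_trans Ms0.
have uD r : 0 < r <= 1 -> 0 <= u r /\ u r <= u 1.
  move=> /andP[r0' r1']; split; first by apply: u0; rewrite r0' r1'.
  exact: umono.
have a0 : 0 < u 1.
  have [u00 _] := uD r0 r0D.
  have ur0p : 0 < u r0 by rewrite lt_neqAle eq_sym ur0 u00.
  by apply: lt_le_trans ur0p _; case: (uD r0 r0D).
have [r1 [r1D ur1]] := @near1 R u g rd a0.
pose D := `]0, (1:R)]%classic.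
pose F := fun r : R => `|u r| `^ p * r ^+ N.-1.
have F0 r : 0 < r -> 0 <= F r.
  by move=> r0'; rewrite /F mulr_ge0 // ?powR_ge0 // exprn_ge0 // ltW.
have DF0 x : D x -> (0 <= (F x)%:E)%E.
  by rewrite /D /= in_itv /= => /andP[x0 _]; rewrite lee_fin F0.
have mF : measurable_fun D (EFin \o F).
  apply/measurable_EFinP; apply: measurable_funM.
    apply: (measurableT_comp (measurable_powR p)).
    exact: (measurableT_comp (@normr_measurable R _) mu_).
  exact: exprn_measurable.
pose c := u r1 `^ p * r1 ^+ N.-1.
have c0 : 0 < c.
  by rewrite /c mulr_gt0 // ?powR_gt0 // exprn_gt0 //; case/andP: r1D.
have Ipos : (0 < \int[lebesgue_measure]_(x in D) (F x)%:E)%E.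
  have H1 : (0 < \int[lebesgue_measure]_(x in `[r1, 1%R]%classic) (cst c%:E) x)%E.
    rewrite integral_cst; last exact: measurable_itv.
    have := lebesgue_measure_itv (Interval (BLeft r1) (BRight 1%R)).
    case/andP: r1D => r10 r11.
    rewrite /= lte_fin r11 -EFinD => ->.
    by rewrite -EFinM lte_fin mulr_gt0 // subr_gt0.
  apply: lt_le_trans H1 _.
  apply: le_int_sub => //.
    by move=> x _; rewrite lee_fin ltW.
  move=> x; rewrite /= in_itv /= => /andP[r1x x1].
  case/andP: r1D => r10 r11.
  have x0 : 0 < x by apply: lt_le_trans r1x.
  split; first by rewrite /D /= in_itv /= x0 x1.
  rewrite lee_fin /c /F; apply: ler_pM.
  - exact: powR_ge0.
  - by rewrite exprn_ge0 // ltW.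
  - have [ur1' _] := uD r1 (andb_true_intro (conj r10 (ltW r11))).
    have [ux _] := uD x (andb_true_intro (conj x0 x1)).
    rewrite ger0_norm //; apply: ge0_ler_powR; first by rewrite ltW // (lt_trans _ p2).
    + by rewrite nnegrE.
    + by rewrite nnegrE.
    + exact: umono.
  - by apply: lerXn2r; rewrite ?nnegrE // ltW.
have Iup : (\int[lebesgue_measure]_(x in D) (F x)%:E <=
    (u 1)%:E * \int[lebesgue_measure]_(x in D) (F x)%:E)%E.
  apply: (@le_trans _ _ (radint N (fun r => `|g r| `^ p + `|u r| `^ p))).
    apply: le_int_sub => //.
      move=> x; rewrite /D /= in_itv /= => /andP[x0 _].
      by rewrite lee_fin mulr_ge0 // ?addr_ge0 ?powR_ge0 // exprn_ge0 // ltW.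
    move=> x Dx; split => //; rewrite lee_fin /F ler_wpM2r //.
      by move: Dx; rewrite /D /= in_itv /= => /andP[x0 _]; rewrite exprn_ge0 // ltW.
    by rewrite lerDr powR_ge0.
  have mD : measurable D by exact: measurable_itv.
  rewrite neh -(ge0_integralZl_EFin lebesgue_measure mD DF0 mF (ltW a0)).
  apply: le_int_sub => //.
    move=> x; rewrite /= in_itv /= => /andP[x0 x1].
    have [ux ux1] := uD x (andb_true_intro (conj x0 x1)).
    rewrite lee_fin; apply: mulr_ge0; last by rewrite exprn_ge0 // ltW.
    have uxs : u x <= s0 by rewrite (le_trans ux1) // ltW // (lt_trans a1).
    by rewrite /ftilde ltNge ux /= uxs; apply: mulr_ge0 => //; exact: powR_ge0.
    move=> x Dx; apply: mule_ge0; [by rewrite lee_fin ltW | exact: DF0].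
  move=> x Dx; split => //.
  move: Dx; rewrite /= in_itv /= => /andP[x0 x1].
  have [ux ux1] := uD x (andb_true_intro (conj x0 x1)).
  rewrite -EFinM lee_fin /F mulrA; apply: ler_wpM2r; first by rewrite exprn_ge0 // ltW.
  exact: (@pointwise R p s0 l q (u 1) (u x) p2 qp a1 s01 ux ux1).
have Ifin : (\int[lebesgue_measure]_(x in D) (F x)%:E)%E \is a fin_num.
  by rewrite ge0_fin_numE ?(ltW Ipos) //; exact: Iu.
move: Ipos Iup; rewrite -(fineK Ifin).
move: (fine _) => x; rewrite lte_fin -EFinM lee_fin => xp xle.
clear -xp xle a1; nra.
Qed.
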